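(* Let $(X,d)$ be a bounded metric space and let $M: X\to\mathbb{R}$ satisfy $d(x,y)\le M(x)\le d(x,z)+M(z)$ for all $x,y,z\in X$. Let $d_S$ be the subset distance on $\mathcal{F}(X)$ defined in the context. For any $X_1,X_2\in\mathcal{F}(X)$ with $|X_1|\le|X_2|$, there exists an injection $\chi_0: X_1\to X_2$ such that $d_S(X_1,X_2)=d_{\chi_0}(X_1,X_2)$ and $\chi_0(x)=x$ for all $x\in X_1\cap X_2$.
   Context: $\mathcal{F}(X)$ denotes the set of all finite subsets of $X$. For $A,B\in\mathcal{F}(X)$ with $|A|\le|B|$ and an injection $\chi:A\to B$, define $d_\chi(A,B)=\sum_{x\in A} d(x,\chi(x))+\sum_{y\in B\setminus\chi(A)} M(y)$. The subset distance is $d_S(A,B)=d_S(B,A)=\min\{d_\chi(A,B) : \chi:A\to B \text{ an injection}\}$ (for $|A|\le|B|$). *)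

(* Defs.v *)
From HB Require Import structures.
From mathcomp Require Import all_boot all_order all_algebra.
From mathcomp Require Import finmap.
From mathcomp Require Import reals.
Set Implicit Arguments. Unset Strict Implicit. Unset Printing Implicit Defensive.
Import Order.TTheory GRing.Theory Num.Theory.
Local Open Scope ring_scope.


Definition is_metric (R : realType) (X : choiceType) (d : X -> X -> R) : Prop :=
  (forall x y, 0 <= d x y) /\ (forall x y, d x y = 0 <-> x = y) /\
  (forall x y, d x y = d y x) /\ (forall x y z, d x z <= d x y + d y z).

Definition metric_bounded (R : realType) (X : choiceType) (d : X -> X -> R) : Prop :=
  exists C : R, forall x y, d x y <= C.

Definition d_chi (R : realType) (X : choiceType) (d : X -> X -> R) (M : X -> R)
    (A B : {fset X}) (chi : A -> B) : R :=
  \sum_(x : A) d (val x) (val (chi x))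
  + \sum_(y : B | y \notin [seq chi x | x : A]) M (val y).

Definition inj_costs (R : realType) (X : choiceType) (d : X -> X -> R) (M : X -> R)
    (A B : {fset X}) : seq R :=
  [seq d_chi d M (fun x : A => (f : {ffun A -> B}) x) | f <- enum [pred f : {ffun A -> B} | injectiveb f]].

(* minimum of a seq of reals (its head when nonempty; 0 for the empty seq) *)
Definition seqmin (R : realType) (s : seq R) : R :=
  foldr Num.min (head 0 s) s.

Definition d_S (R : realType) (X : choiceType) (d : X -> X -> R) (M : X -> R)
    (A B : {fset X}) : R :=
  if (#|` A|%fset <= #|` B|%fset)%N then seqmin (inj_costs d M A B)
  else seqmin (inj_costs d M B A).

(* Main.v *)
Require Import Defs.
From mathcomp Require Import lra.
From HB Require Import structures.
From mathcomp Require Import all_boot all_order all_algebra.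
From mathcomp Require Import finmap.
From mathcomp Require Import reals.
Import Order.TTheory GRing.Theory Num.Theory.
Local Open Scope ring_scope.

Section S.
Variables (R : realType).

Lemma foldr_min_le (s : seq R) x0 y : y \in s -> foldr Num.min x0 s <= y.
Proof.
elim: s => //= a t IH; rewrite in_cons => /orP [/eqP ->|/IH h].
  by rewrite ge_min lexx.
by rewrite ge_min h orbT.
Qed.

Lemma foldr_min_in (s : seq R) x0 : foldr Num.min x0 s \in x0 :: s.
Proof.
elim: s => [|a t IH] /=; first by rewrite mem_head.
rewrite minEle; case: ifP => _; first by rewrite !in_cons eqxx orbT.
move: IH; rewrite !in_cons => /orP [->//|->]; by rewrite !orbT.
Qed.

Lemma seqmin_le (s : seq R) y : y \in s -> seqmin s <= y.
Proof. exact: foldr_min_le. Qed.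

Lemma seqmin_in (s : seq R) : s != [::] -> seqmin s \in s.
Proof.
case: s => // a t _; have := foldr_min_in (a :: t) a.
by rewrite /seqmin /= in_cons => /orP [/eqP ->|]; rewrite ?mem_head.
Qed.

Variables (X : choiceType) (d : X -> X -> R) (M : X -> R).

Lemma d_chi_formula (A B : {fset X}) (f : A -> B) : injective f ->
  d_chi d M f = \sum_(x : A) (d (val x) (val (f x)) - M (val (f x)))
                + \sum_(y : B) M (val y).
Proof.
move=> finj; rewrite /d_chi.
rewrite [X in _ = _ + X](bigID [pred y | y \in [seq f x | x : A]]) /=.
have -> : \sum_(y : B | y \in [seq f x | x : A]) M (val y)
          = \sum_(x : A) M (val (f x)).
  rewrite -big_uniq /=; last by rewrite map_inj_uniq ?enum_uniq.
  by rewrite big_map big_enum.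
by rewrite sumrB addrA subrK.
Qed.

Variables (hd : is_metric d) (hM : forall x y z : X, d x y <= M x /\ M x <= d x z + M z).
Variables (A B : {fset X}).

Definition cost (f : {ffun A -> B}) := d_chi d M (fun x => f x).
Definition bad (f : {ffun A -> B}) :=
  [pred y : A | (val y \in B) && (val (f y) != val y)].

Lemma step (f : {ffun A -> B}) x : injective f -> x \in bad f ->
  exists g : {ffun A -> B}, [/\ injective g, cost g <= cost f & (#|bad g| < #|bad f|)%N].
Proof.
move=> finj; rewrite inE => /andP [hxB hne].
case: hd => d0 [d00 [dsym dtri]].
set bx : B := [` hxB]%fset.
have fxbx : f x != bx by apply: contra hne => /eqP ->.
pose t z := if z == bx then f x else if z == f x then bx else z.
have tK : involutive t.
  move=> z; rewrite /t; case: (z =P bx) => [->|zb]; first by rewrite (negbTE fxbx) eqxx.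
  case: (z =P f x) => [->|zf]; first by rewrite eqxx.
  by move: zb zf => /eqP /negbTE -> /eqP /negbTE ->.
pose g := [ffun y => t (f y)].
have gx : g x = bx by rewrite ffunE /t (negbTE fxbx) eqxx.
have gy y : y != x -> f y != bx -> g y = f y.
  move=> yx ybx; rewrite ffunE /t (negbTE ybx).
  by have -> : (f y == f x) = false by apply/negbTE; apply: contra yx => /eqP /finj ->.
have ginj : injective g.
  by move=> y1 y2; rewrite !ffunE => /(can_inj tK) /finj.
exists g; split => //.
- rewrite /cost !d_chi_formula // lerD2r.
  rewrite (bigD1 x) //= [X in _ <= X](bigD1 x) //= gx /=.
  have dxx : d (val x) (val x) = 0 by apply/d00.
  case: (pickP (fun w => f w == bx)) => [w /eqP fw|nw].
  + have wx : w != x by apply/eqP => wx; move: fxbx; rewrite -wx fw eqxx.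
    rewrite (bigD1 w) //= [in X in _ <= X](bigD1 w) //=.
    have gw : g w = f x by rewrite ffunE /t fw eqxx.
    rewrite gw fw /=.
    rewrite (eq_bigr (fun i => d (val i) (val (f i)) - M (val (f i)))); last first.
      move=> y /andP [yx yw]; rewrite gy //; apply: contra yw => /eqP.
      by rewrite -fw => /finj ->.
    have := dtri (fsval w) (fsval x) (fsval (f x)).
    have := (d00 (fsval x) (fsval x)).2 erefl. lra.
  + rewrite lerD //.
    * have := (hM (val (f x)) (val x) (val x)).2.
      rewrite dxx sub0r dsym. lra.
    * rewrite (eq_bigr (fun i => d (val i) (val (f i)) - M (val (f i)))) ?lexx //.
      move=> y yx; rewrite gy //; exact/negbT/nw.
- rewrite [X in (_ < X)%N](cardD1 x) inE hxB hne /= add1n ltnS.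
  apply: subset_leq_card; apply/subsetP => y; rewrite !inE => /andP [yB gyne].
  have yx : y != x by apply: contra gyne => /eqP ->; rewrite gx.
  rewrite yx yB /=.
  case: (f y =P bx) => [fyb|/eqP fyb]; last by rewrite -gy.
  rewrite fyb /=; apply: contra yx => /eqP /val_inj ->; done.
Qed.

Lemma fix_all n (f : {ffun A -> B}) : injective f -> (#|bad f| <= n)%N ->
  exists g : {ffun A -> B}, [/\ injective g, cost g <= cost f &
     forall x : A, val x \in B -> val (g x) = val x].
Proof.
elim: n f => [|n IH] f finj hc.
  exists f; split => // x xB; apply/eqP; apply: contraTT hc => h.
  by rewrite -ltnNge; apply/card_gt0P; exists x; rewrite inE xB h.
case: (pickP (bad f)) => [x xb|nb].
  have [g [ginj gc gb]] := step f x finj xb.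
  have [h [hinj hc' hf]] := IH g ginj (leq_trans gb hc).
  by exists h; split => //; apply: le_trans hc' gc.
exists f; split => // x xB; apply/eqP.
by have := nb x; rewrite inE xB /= => /negbT; rewrite negbK.
Qed.

End S.

Theorem lemma2p1 (R : realType) (X : choiceType) (d : X -> X -> R) (M : X -> R)
    (hd : is_metric d) (hb : metric_bounded d)
    (hM : forall x y z : X, d x y <= M x /\ M x <= d x z + M z)
    (X1 X2 : {fset X}) (hcard : (#|` X1|%fset <= #|` X2|%fset)%N) :
  exists chi0 : X1 -> X2,
    injective chi0 /\
    d_S d M X1 X2 = d_chi d M chi0 /\
    (forall x : X1, val x \in X2 -> val (chi0 x) = val x).
Proof.
have h : (#|{: X1}| <= #|{: X2}|)%N by rewrite -!cardfE.
pose f0 := [ffun x : X1 => (enum_val (widen_ord h (enum_rank x)) : X2)].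
have f0inj : injective f0.
  by move=> a b; rewrite !ffunE => /enum_val_inj /(congr1 val) /= /ord_inj /enum_rank_inj.
rewrite /d_S hcard.
set s := inj_costs d M X1 X2.
have f0in : f0 \in enum [pred f : {ffun X1 -> X2} | injectiveb f].
  by rewrite mem_enum inE; apply/injectiveP.
have sne : s != [::].
  by rewrite /s /inj_costs; case: (enum _) f0in.
have := @seqmin_in R s sne; rewrite {2}/s /inj_costs => /mapP [f fin fE].
have finj : injective f by move: fin; rewrite mem_enum inE => /injectiveP.
have [g [ginj gc gfix]] := @fix_all R X d M hd hM X1 X2 _ f finj (leqnn _).
exists (fun x => g x); split => //; split => //.
apply/le_anti/andP; split; last by rewrite fE; exact: gc.
have gin : g \in enum [pred f : {ffun X1 -> X2} | injectiveb f].
  by rewrite mem_enum inE; apply/injectiveP.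
exact: (@seqmin_le R _ _ (map_f (fun f : {ffun X1 -> X2} => d_chi d M (fun x => f x)) gin)).
Qed.
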